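(* Let $n\geqslant2$, $0<\varepsilon<1$, $i_0,j_0\in\{0,\dots,n\}$, $x_{i_0}\geqslant1$ and $y_{j_0}$ integers, $\boldsymbol{c}\in\mathbf{Z}^{n+1}$, $q\geqslant1$. For $\boldsymbol{x}=(x_i)\in\mathbf{Z}^{n+1}$ (with the given $x_{i_0}$) and $(a'_j)_{j\neq j_0}\in(\mathbf{Z}/q\mathbf{Z})^n$, let $\boldsymbol{a}'\in(\mathbf{Z}/q\mathbf{Z})^{n+1}$ have coordinates $a'_j$ ($j\neq j_0$) and $y_{j_0}\bmod q$ at $j_0$. Then for every $\eta>0$, \[\sum_{(x_i)_{i\neq i_0}\in\mathbf{Z}^n}\ \sum_{(a'_j)_{j\neq j_0}\in(\mathbf{Z}/q\mathbf{Z})^n}\underline{w}_\varepsilon(\boldsymbol{x})\,|S_q(\boldsymbol{x},\boldsymbol{a}')(\boldsymbol{c})|\ll q^{n+3+\eta}x_{i_0}^n,\] the implied constant depending only on $n,\varepsilon,\eta$.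
   Context: $e_q(x)=\exp(2i\pi x/q)$; $S_q(\boldsymbol{x},\boldsymbol{a}')(\boldsymbol{c})=\sum_{d\in(\mathbf{Z}/q\mathbf{Z})^*}\sum_{\boldsymbol{b}\in(\mathbf{Z}/q\mathbf{Z})^{n+1}}e_q\big(d\sum_kx_ka'_kb_k+\boldsymbol{c}.\boldsymbol{b}\big)$. $\omega_0(x)=\exp(-(1-x^2)^{-1})$ for $|x|<1$, $0$ otherwise; $c_0=\int\omega_0$; $\underline{\omega}_\varepsilon(x)=c_0^{-1}\int_{-\infty}^{x/\varepsilon-1}\omega_0(y)dy$; $\underline{w}_\varepsilon(\boldsymbol{x})=\prod_{i\neq i_0}\underline{\omega}_\varepsilon(1-\frac{|x_i|}{x_{i_0}})\underline{\omega}_\varepsilon(\frac{|x_i|}{x_{i_0}}-\frac1{x_{i_0}})$. *)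

(* Defs.v *)
From mathcomp Require Import all_boot all_order all_algebra.
From mathcomp Require Import all_classical all_reals all_analysis.
From mathcomp Require Import complex.
Set Implicit Arguments. Unset Strict Implicit. Unset Printing Implicit Defensive.
Import Order.TTheory GRing.Theory Num.Theory.
Local Open Scope ring_scope.

Definition eq_char (R : realType) (q : nat) (x : int) : R[i] :=
  (cos (2 * pi * x%:~R / q%:R) +i* sin (2 * pi * x%:~R / q%:R))%C.

(* Residues mod q are represented by 'I_q (integers 0..q-1); the units of
   Z/qZ are the d : 'I_q with coprime d q (for q = 1 this is {0}, as
   Z/1Z = {0} is the zero ring whose only element is a unit).
   Since e_q is q-periodic on Z, using integer representatives for
   a' (arbitrary integers) is the same as working in Z/qZ. *)
Definition S_q (R : realType) (n q : nat) (x a' c : 'I_n.+1 -> int) : R[i] :=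
  \sum_(d : 'I_q | coprime d q)
    \sum_(b : {ffun 'I_n.+1 -> 'I_q})
      eq_char R q ((d : nat)%:Z * (\sum_(k < n.+1) x k * a' k * (b k : nat)%:Z)
                   + \sum_(k < n.+1) c k * (b k : nat)%:Z).

Definition omega0 (R : realType) (x : R) : R :=
  if `|x| < 1 then expR (- (1 - x ^+ 2)^-1) else 0.

Definition c0 (R : realType) : R :=
  Rintegral (@lebesgue_measure R) setT (@omega0 R).

Definition omega_low (R : realType) (eps x : R) : R :=
  (c0 R)^-1 *
  Rintegral (@lebesgue_measure R) `]-oo, x / eps - 1]%classic (@omega0 R).

Definition w_low (R : realType) (n : nat) (eps : R) (i0 : 'I_n.+1)
    (x : 'I_n.+1 -> int) : R :=
  \prod_(i < n.+1 | i != i0)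
     (omega_low eps (1 - `|(x i)%:~R : R| / (x i0)%:~R) *
      omega_low eps (`|(x i)%:~R : R| / (x i0)%:~R - 1 / (x i0)%:~R)).

Definition xvec (n : nat) (i0 : 'I_n.+1) (X : int) (g : 'I_n -> int)
    : 'I_n.+1 -> int :=
  fun i => match unlift i0 i with Some k => g k | None => X end.

Definition avec (n : nat) (j0 : 'I_n.+1) (y : int) (q : nat) (a : 'I_n -> 'I_q)
    : 'I_n.+1 -> int :=
  fun j => match unlift j0 j with
           | Some k => ((a k : nat)%:Z)
           | None => (y %% (q%:Z))%Z
           end.

(* Main.v *)
Require Import Defs.
From mathcomp Require Import all_boot all_order all_algebra.
From mathcomp Require Import all_classical all_reals all_analysis.
From mathcomp Require Import complex.
From mathcomp Require Import ring lra zify.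
Import Order.TTheory GRing.Theory Num.Theory.
Set Implicit Arguments. Unset Strict Implicit. Unset Printing Implicit Defensive.

Module NatPart.

Definition tau (n : nat) : nat := #|[set d : 'I_n.+1 | (d : nat) %| n]|.

Lemma dvd_div_gcd d a b : 0 < d -> d %| a * b -> d %/ gcdn d a %| b.
Proof.
move=> d0 dab.
have g0 : 0 < gcdn d a by rewrite gcdn_gt0 d0.
have h1 : d %| gcdn d a * b.
  by rewrite muln_gcdl dvdn_gcd dvdn_mulr.
by rewrite -(@dvdn_pmul2l (gcdn d a)) // [X in X %| _]mulnC divnK ?dvdn_gcdl.
Qed.

Lemma tau_mul a b : 0 < a -> 0 < b -> tau (a * b) <= tau a * tau b.
Proof.
move=> a0 b0; rewrite /tau -cardsX.
set A := [set d : 'I_(a * b).+1 | (d : nat) %| a * b].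
pose f (d : 'I_(a * b).+1) : 'I_a.+1 * 'I_b.+1 :=
  (inord (gcdn d a), inord (d %/ gcdn d a)).
have ab0 : 0 < a * b by rewrite muln_gt0 a0.
have dpos (d : 'I_(a*b).+1) : d \in A -> 0 < d.
  rewrite inE => dd; case: (posnP d) => // d0; move: dd; rewrite d0 dvd0n.
  by move/eqP=> e; move: ab0; rewrite e.
have hg (d : 'I_(a*b).+1) : gcdn d a <= a by rewrite dvdn_leq // dvdn_gcdr.
have hq (d : 'I_(a*b).+1) : d \in A -> d %/ gcdn d a <= b.
  move=> dA; apply: dvdn_leq => //; apply: dvd_div_gcd; first exact: dpos.
  by move: dA; rewrite inE.
rewrite -(card_in_imset (f := f)); last first.
  move=> d1 d2 h1 h2 [] e1 e2; apply: val_inj => /=.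
  have := congr1 val e1; rewrite /= !inordK ?ltnS ?hg // => eg.
  have := congr1 val e2; rewrite /= !inordK ?ltnS ?hq // => eq.
  by rewrite -(divnK (dvdn_gcdl d1 a)) -(divnK (dvdn_gcdl d2 a)) eq eg.
apply: subset_leq_card; apply/fintype.subsetP => u /imsetP [d dA ->].
rewrite inE /= !inE /= !inordK ?ltnS ?hg ?hq // dvdn_gcdr /=.
apply: dvd_div_gcd; first exact: dpos.
by move: dA; rewrite inE.
Qed.

Lemma tau_pexp p e : prime p -> tau (p ^ e) <= e.+1.
Proof.
move=> pp; rewrite /tau.
set A := [set d : 'I_(p ^ e).+1 | (d : nat) %| p ^ e].
pose f (d : 'I_(p ^ e).+1) : 'I_e.+1 := inord (logn p d).
have hl (d : 'I_(p^e).+1) : d \in A -> logn p d <= e /\ (d : nat) = p ^ logn p d.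
  rewrite inE => /(dvdn_pfactor _ _ pp) [m me ->].
  by rewrite pfactorK.
rewrite -(card_in_imset (f := f)); last first.
  move=> d1 d2 h1 h2 e1; apply: val_inj => /=.
  case: (hl _ h1) => l1 E1; case: (hl _ h2) => l2 E2.
  move: (congr1 val e1); rewrite /= !inordK ?ltnS // => ee.
  by rewrite E1 E2 ee.
by apply: leq_trans (max_card _) _; rewrite card_ord.
Qed.

Lemma tau1 : tau 1 <= 1.
Proof.
rewrite /tau; apply: leq_trans (subset_leq_card (B := [set (ord_max : 'I_2)]) _) _.
  apply/fintype.subsetP => d; rewrite !inE.
  case: d => [[|[|m]] //=] H _.
by rewrite cards1.
Qed.

Lemma tau_prod (I : Type) (s : seq I) (F : I -> nat) :
  (forall i, 0 < F i) -> tau (\prod_(i <- s) F i) <= \prod_(i <- s) tau (F i).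
Proof.
move=> Fp; elim: s => [|i s IH]; first by rewrite !big_nil tau1.
rewrite !big_cons; apply: leq_trans (tau_mul _ _) _ => //.
  by rewrite prodn_gt0.
by rewrite leq_mul2l IH orbT.
Qed.

Lemma expn_monor m n e : m <= n -> m ^ e <= n ^ e.
Proof. by move=> mn; case: e => // e; rewrite leq_exp2r. Qed.

Lemma pexp_bound k p e : 0 < k -> 1 < p ->
  e.+1 ^ k <= (if p < 2 ^ k then k ^ k else 1) * p ^ e.
Proof.
move=> k0 p1; case: ifP => hp.
  have h1 : e.+1 <= k * (e %/ k).+1 by rewrite mulnC ltn_ceil.
  have h2 : (e %/ k).+1 <= 2 ^ (e %/ k) by rewrite ltn_expl.
  have h3 : e.+1 <= k * 2 ^ (e %/ k).
    by apply: leq_trans h1 _; rewrite leq_mul2l h2 orbT.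
  apply: leq_trans (expn_monor k h3) _.
  rewrite expnMn -expnM leq_mul2l; apply/orP; right.
  apply: leq_trans (_ : 2 ^ e <= _); first by apply: leq_pexp2l => //; exact: leq_trunc_div.
  exact: expn_monor.
rewrite mul1n.
have h3 : e.+1 <= 2 ^ e by rewrite ltn_expl.
apply: leq_trans (expn_monor k h3) _.
rewrite -expnM mulnC expnM; apply: expn_monor.
by rewrite leqNgt hp.
Qed.

Lemma prod_count (s : seq nat) P0 K :
  \prod_(p <- s) (if p < P0 then K else 1) = K ^ count (fun p => p < P0) s.
Proof.
elim: s => [|p s IH]; first by rewrite big_nil.
by rewrite big_cons IH /=; case: ifP => _; rewrite ?expnS ?add0n ?mul1n.
Qed.

Lemma count_small (s : seq nat) P0 : uniq s -> count (fun p => p < P0) s <= P0.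
Proof.
move=> us; rewrite -size_filter -[P0 in _ <= P0](size_iota 0).
apply: uniq_leq_size; first by rewrite filter_uniq.
by move=> x; rewrite mem_filter mem_iota add0n => /andP [].
Qed.

Lemma tau_bound k : 0 < k -> exists D, forall q, 0 < q -> tau q ^ k <= D * q.
Proof.
move=> k0; exists ((k ^ k) ^ (2 ^ k)) => q q0.
have qE : q = \prod_(p <- primes q) p ^ logn p q.
  by rewrite {1}(prod_prime_decomp q0) prime_decompE big_map.
have pp : forall p, p \in primes q -> 1 < p.
  by move=> p; rewrite mem_primes => /andP [/prime_gt1].
have h1 : tau q <= \prod_(p <- primes q) (logn p q).+1.
  rewrite {1}qE; apply: leq_trans (tau_prod _ _) _.
    by move=> p; rewrite expn_gt0; case: p.
  rewrite big_seq_cond [X in _ <= X]big_seq_cond; apply: leq_prod => p /andP [hp _].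
  apply: tau_pexp; by move: hp; rewrite mem_primes => /andP [].
apply: leq_trans (expn_monor k h1) _.
rewrite (big_morph (fun x => x ^ k) (fun x y => expnMn x y k) (exp1n k)).
apply: leq_trans (_ : \prod_(p <- primes q) ((if p < 2 ^ k then k ^ k else 1) * p ^ logn p q) <= _).
  rewrite big_seq_cond [X in _ <= X]big_seq_cond; apply: leq_prod => p /andP [hp _].
  exact: pexp_bound (pp _ hp).
rewrite big_split /= -qE prod_count leq_mul2r; apply/orP; right.
apply: leq_pexp2l; first by rewrite expn_gt0 k0.
apply: count_small; exact: primes_uniq.
Qed.

Lemma sum_mult N d : 0 < d -> \sum_(v < N) (if d %| v.+1 then d else 0) = d * (N %/ d).
Proof.
move=> d0; elim: N => [|N IH]; first by rewrite big_ord0 div0n muln0.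
rewrite big_ord_recr /= IH (divnS _ d0) mulnDr; case: (d %| N.+1) => /=.
  by rewrite muln1 addnC.
by rewrite muln0 addn0.
Qed.

Lemma sum_gcd N q : 0 < q -> \sum_(v < N) gcdn v.+1 q <= N * tau q.
Proof.
move=> q0.
apply: leq_trans (_ : \sum_(v < N) \sum_(d : 'I_q.+1 | (d : nat) %| q)
                       (if (d : nat) %| v.+1 then (d : nat) else 0) <= _).
  apply: leq_sum => v _.
  have gq : gcdn v.+1 q < q.+1 by rewrite ltnS dvdn_leq // dvdn_gcdr.
  rewrite (bigD1 (Ordinal gq)) /= ?dvdn_gcdr ?dvdn_gcdl //.
  exact: leq_addr.
rewrite exchange_big /=.
apply: leq_trans (_ : \sum_(d : 'I_q.+1 | (d : nat) %| q) N <= _).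
  apply: leq_sum => d dq.
  have d0 : 0 < d.
    case: (posnP d) => // e; move: dq; rewrite e dvd0n => /eqP e2.
    by move: q0; rewrite e2.
  by rewrite sum_mult // mulnC leq_trunc_div.
by rewrite sum_nat_cond_const mulnC.
Qed.

End NatPart.
Import NatPart.

Module Part0.
Local Open Scope ring_scope.

Lemma count_sol (q d : nat) (x c : int) : (0 < q)%N -> coprime d q ->
  (#|[set t : 'I_q | (q%:Z %| (d%:Z * x * (t : nat)%:Z + c)%R)%Z]| <= gcdn `|x| q)%N.
Proof.
move=> q0 cdq.
set g := gcdn q `|x|.
set r := (q %/ g)%N.
have g0 : (0 < g)%N by rewrite gcdn_gt0 q0.
have qE : (r * g)%N = q by rewrite divnK // dvdn_gcdl.
have r0 : (0 < r)%N by move: q0; rewrite -qE muln_gt0 => /andP [].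
set A := [set t : 'I_q | (q%:Z %| (d%:Z * x * (t : nat)%:Z + c)%R)%Z].
have hlt (t : 'I_q) : (t %/ r < g)%N by rewrite ltn_divLR // mulnC qE.
pose f (t : 'I_q) : 'I_g := Ordinal (hlt t).
rewrite gcdnC -/g -(card_in_imset (f := f)); last first.
  move=> t1 t2; rewrite !inE => h1 h2 e1; apply: val_inj => /=.
  have e2 : (t1 %/ r)%N = (t2 %/ r)%N by move: (congr1 val e1).
  have h3 : (q%:Z %| (d%:Z * x * ((t1 : nat)%:Z - (t2 : nat)%:Z))%R)%Z.
    have := rpredB h1 h2.
    by rewrite opprD addrACA subrr addr0 -mulrBr.
  have cqd : coprime q d by rewrite coprime_sym.
  move: h3; rewrite dvdzE !abszM /= -mulnA (Gauss_dvdr _ cqd).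
  move=> /(dvd_div_gcd q0) h4.
  have h5 : ((r : int) %| ((t1 : nat)%:Z - (t2 : nat)%:Z)%R)%Z by rewrite dvdzE.
  move: h5; rewrite -eqz_mod_dvd !modz_nat => /eqP [] e3.
  by rewrite (divn_eq t1 r) (divn_eq t2 r) e2 e3.
apply: leq_trans (max_card _) _; by rewrite card_ord.
Qed.

End Part0.
Import Part0.

Module Part1.
Local Open Scope ring_scope.

Section Trig.
Variable R : realType.

Lemma eq_charD q (a b : int) : eq_char R q (a + b) = eq_char R q a * eq_char R q b.
Proof.
rewrite /eq_char intrD mulrDr mulrDl cosD sinD.
apply/eqP; rewrite eq_complex /=; apply/andP; split; apply/eqP; ring.
Qed.

Lemma eq_char0 q : eq_char R q 0 = 1.
Proof. by rewrite /eq_char mulr0 mul0r cos0 sin0. Qed.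

Lemma cos_sin_2pik (k : int) : cos (2 * pi * k%:~R) = 1 :> R /\ sin (2 * pi * k%:~R) = 0 :> R.
Proof.
have hp (m : nat) : cos (2 * pi * m%:R) = 1 :> R /\ sin (2 * pi * m%:R) = 0 :> R.
  have -> : 2 * pi * m%:R = 0 + (pi *+ 2) *+ m :> R by rewrite add0r -mulr_natr mulr_natr; ring.
  by rewrite (periodicn (@cosD2pi R)) (periodicn (@sinD2pi R)) cos0 sin0.
case: k => m; first exact: hp.
rewrite NegzE mulrNz mulrN cosN sinN; case: (hp m.+1) => -> ->; by rewrite oppr0.
Qed.

Lemma eq_char_mul q (k : int) : (0 < q)%N -> eq_char R q (q%:Z * k) = 1.
Proof.
move=> q0; rewrite /eq_char.
have -> : 2 * pi * (q%:Z * k)%:~R / q%:R = 2 * pi * k%:~R :> R.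
  have q0' : q%:R != 0 :> R by rewrite pnatr_eq0 -lt0n.
  rewrite intrM /= -pmulrn; field; by rewrite pnatr_eq0 -lt0n.
by case: (cos_sin_2pik k) => -> ->.
Qed.

Lemma eq_char_neq1 q (m : int) : (0 < q)%N -> ~~ (q%:Z %| m)%Z -> eq_char R q m != 1.
Proof.
move=> q0 nd.
have q0z : (0 < q%:Z) by rewrite ltz_nat.
rewrite (divz_eq m q%:Z) eq_charD [((m %/ _)%Z * _)%R]mulrC eq_char_mul // mul1r.
have r0 : 0 <= (m %% q%:Z)%Z by rewrite modz_ge0 // gt_eqF.
have rq : (m %% q%:Z)%Z < q%:Z by rewrite ltz_pmod.
have rn0 : (m %% q%:Z)%Z != 0 by apply: contra nd => /eqP /dvdz_mod0P.
move: r0 rq rn0; case: (m %% q%:Z)%Z => // rn _; rewrite ltz_nat => rq rn0.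
have rn0' : (0 < rn)%N by rewrite lt0n; apply: contra rn0 => /eqP ->.
apply/eqP => h.
have hc : cos (2 * pi * (rn%:Z)%:~R / q%:R) = 1 :> R by case: h.
set a := pi * (rn%:R / q%:R) : R.
have ha : 0 < a < pi.
  have hq : (0 : R) < q%:R by rewrite ltr0n.
  have h1 : (rn%:R / q%:R : R) < 1 by rewrite ltr_pdivrMr // mul1r ltr_nat.
  have h2 : (0 : R) < rn%:R / q%:R by rewrite divr_gt0 // ltr0n.
  apply/andP; split; first by rewrite mulr_gt0 // pi_gt0.
  by rewrite -[X in _ < X]mulr1 ltr_pM2l // pi_gt0.
have e : 2 * pi * (rn%:Z)%:~R / q%:R = a *+ 2 :> R.
  by rewrite /a -mulr_natr -pmulrn; ring.
move: hc; rewrite e cos_mulr2n => hc.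
have hs : sin a ^+ 2 = 0.
  by rewrite sin2cos2; move: hc; rewrite mulr2n; lra.
move: hs => /eqP; rewrite expf_eq0 /= => /eqP hs.
by move: (sin_gt0_pi ha); rewrite hs ltxx.
Qed.

Lemma eq_char_pow q (m : int) (b : nat) : eq_char R q (m * b%:Z) = eq_char R q m ^+ b.
Proof.
elim: b => [|b IH]; first by rewrite mulr0 eq_char0 expr0.
by rewrite -addn1 PoszD mulrDr mulr1 eq_charD IH exprD expr1.
Qed.

Lemma geom_sum q (m : int) : (0 < q)%N ->
  \sum_(b < q) eq_char R q (m * (b : nat)%:Z) = if (q%:Z %| m)%Z then q%:R else 0.
Proof.
move=> q0; under eq_bigr do rewrite eq_char_pow.
case: ifP => hd.
  have -> : eq_char R q m = 1.
    by case/dvdzP: hd => k ->; rewrite mulrC eq_char_mul.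
  by under eq_bigr do rewrite expr1n; rewrite sumr_const card_ord.
have hz : eq_char R q m - 1 != 0 by rewrite subr_eq0 eq_char_neq1 // hd.
apply/eqP; rewrite -(mulrI_eq0 _ (lregP hz)) -subrX1 -eq_char_pow.
by rewrite mulrC eq_char_mul // subrr.
Qed.

Lemma eq_char_sum q (I : Type) (r : seq I) (P : pred I) (F : I -> int) :
  eq_char R q (\sum_(i <- r | P i) F i) = \prod_(i <- r | P i) eq_char R q (F i).
Proof. exact: (big_morph _ (@eq_charD q) (@eq_char0 q)). Qed.

Lemma Sq_eq (n q : nat) (x a c : 'I_n.+1 -> int) :
  @S_q R n q x a c = \sum_(d : 'I_q | coprime d q) \prod_(k < n.+1)
     \sum_(t < q) eq_char R q ((d%:Z * x k * a k + c k) * (t : nat)%:Z).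
Proof.
rewrite /S_q; apply: eq_bigr => d _.
rewrite bigA_distr_bigA; apply: eq_bigr => b _.
rewrite -eq_char_sum; congr (eq_char R q _).
rewrite mulr_sumr -big_split; apply: eq_bigr => k _ /=; ring.
Qed.

Lemma normc_sum (I : Type) (r : seq I) (P : pred I) (F : I -> R[i]) :
  Normc.normc (\sum_(i <- r | P i) F i) <= \sum_(i <- r | P i) Normc.normc (F i).
Proof.
elim/big_ind2 : _ => //; first by rewrite Normc.normc0.
by move=> y1 y2 z1 z2 h1 h2; apply: le_trans (le_normcD _ _) _; apply: lerD.
Qed.

Lemma normc_prod (I : Type) (r : seq I) (P : pred I) (F : I -> R[i]) :
  Normc.normc (\prod_(i <- r | P i) F i) = \prod_(i <- r | P i) Normc.normc (F i).
Proof. exact: (big_morph _ (@Normc.normcM R) (@Normc.normc1 R)). Qed.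

Lemma normc_nat (m : nat) : Normc.normc (m%:R : R[i]) = m%:R.
Proof. by rewrite normcMn Normc.normc1. Qed.

Definition Gq (q : nat) (m : int) : R := if (q%:Z %| m)%Z then q%:R else 0.

Lemma normc_Sq_le (n q : nat) (x a c : 'I_n.+1 -> int) : (0 < q)%N ->
  Normc.normc (@S_q R n q x a c) <=
  \sum_(d : 'I_q | coprime d q) \prod_(k < n.+1) Gq q (d%:Z * x k * a k + c k).
Proof.
move=> q0; rewrite Sq_eq; apply: le_trans (normc_sum _ _ _) _.
apply: ler_sum => d _; rewrite normc_prod; apply: ler_prod => k _.
apply/andP; split.
  by case: (\sum_(t < q) _) => ? ?; rewrite /Normc.normc sqrtr_ge0.
rewrite geom_sum // /Gq; case: ifP => _; last by rewrite Normc.normc0.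
by rewrite normc_nat.
Qed.
End Trig.

End Part1.
Import Part1.

Module Part2.
Local Open Scope ring_scope.

Section P3.
Variable R : realType.

Lemma Gq_ge0 q m : 0 <= Gq R q m.
Proof. by rewrite /Gq; case: ifP. Qed.

Lemma Gq_le q m : Gq R q m <= q%:R.
Proof. by rewrite /Gq; case: ifP. Qed.

Lemma sum_Gq (q d : nat) (x c : int) : (0 < q)%N -> coprime d q ->
  \sum_(t < q) Gq R q (d%:Z * x * (t : nat)%:Z + c) <= q%:R * (gcdn `|x| q)%:R.
Proof.
move=> q0 cdq.
rewrite /Gq -big_mkcond sumr_const -[X in X <= _]mulr_natr ler_pM2l ?ltr0n // ler_nat.
by move: (count_sol x c q0 cdq); rewrite cardsE.
Qed.

Lemma sum_a_bound (n q : nat) (j0 : 'I_n.+1) (x c : 'I_n.+1 -> int) (y : int) :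
  (0 < q)%N ->
  \sum_(a : {ffun 'I_n -> 'I_q}) Normc.normc (@S_q R n q x (@avec n j0 y q a) c)
  <= q%:R ^+ 2 * \prod_(k < n) (q%:R * (gcdn `|x (lift j0 k)| q)%:R).
Proof.
move=> q0.
apply: le_trans (_ : \sum_(a : {ffun 'I_n -> 'I_q}) \sum_(d : 'I_q | coprime d q)
   \prod_(k < n.+1) Gq R q (d%:Z * x k * (@avec n j0 y q a) k + c k) <= _).
  by apply: ler_sum => a _; exact: normc_Sq_le.
rewrite exchange_big /=.
apply: le_trans (_ : \sum_(d : 'I_q | coprime d q) (q%:R *
   \prod_(k < n) \sum_(t < q) Gq R q (d%:Z * x (lift j0 k) * (t : nat)%:Z + c (lift j0 k))) <= _).
  apply: ler_sum => d _.
  apply: le_trans (_ : \sum_(a : {ffun 'I_n -> 'I_q}) (q%:R * \prod_(k < n)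
     Gq R q (d%:Z * x (lift j0 k) * (a k : nat)%:Z + c (lift j0 k))) <= _).
    apply: ler_sum => a _.
    rewrite (bigD1_ord j0) //=; apply: ler_pM.
    - exact: Gq_ge0.
    - by apply: prodr_ge0 => k _; exact: Gq_ge0.
    - exact: Gq_le.
    rewrite le_eqVlt; apply/orP; left; apply/eqP; apply: eq_bigr => k _.
    by rewrite /avec liftK.
  by rewrite -mulr_sumr bigA_distr_bigA.
pose B : R := q%:R * \prod_(k < n) (q%:R * (gcdn `|x (lift j0 k)| q)%:R).
have B0 : 0 <= B.
  by rewrite /B mulr_ge0 ?ler0n // prodr_ge0 // => k _; rewrite mulr_ge0 ?ler0n.
apply: le_trans (_ : \sum_(d : 'I_q | coprime d q) B <= _).
  apply: ler_sum => d cd; rewrite /B ler_pM2l ?ltr0n //.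
  apply: ler_prod => k _; apply/andP; split.
    by apply: sumr_ge0 => t _; exact: Gq_ge0.
  exact: sum_Gq.
rewrite big_mkcond /=.
apply: le_trans (_ : \sum_(d < q) B <= _).
  by apply: ler_sum => d _; case: ifP.
by rewrite sumr_const card_ord -[X in X <= _]mulr_natl /B mulrA -expr2.
Qed.
End P3.

End Part2.
Import Part2.

Module Part3.
Local Open Scope ring_scope.

Section P4.
Variable R : realType.

Definition Gw (u : R) : R := if u < 1 then expR (- (1 - u)^-1) else 0.

Lemma Gw_ge0 u : 0 <= Gw u.
Proof. by rewrite /Gw; case: ifP => // _; exact: expR_ge0. Qed.

Lemma Gw_noninc : {homo Gw : u v /~ u <= v}.
Proof.
move=> u v vu; case: (ltP u 1) => hu; last first.
  by rewrite {1}/Gw ltNge hu /=; exact: Gw_ge0.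
have hv : v < 1 by apply: le_lt_trans hu.
rewrite /Gw hu hv ler_expR lerN2 lef_pV2 ?posrE ?subr_gt0 //.
by rewrite lerB.
Qed.

Lemma omega0E (x : R) : omega0 x = Gw (x ^+ 2).
Proof.
rewrite /omega0 /Gw; congr (if _ then _ else _).
by rewrite -real_normK ?num_real // expr_lt1.
Qed.

Lemma omega0_ge0 (x : R) : 0 <= omega0 x.
Proof. by rewrite omega0E Gw_ge0. Qed.

Lemma omega0_le1 (x : R) : omega0 x <= 1.
Proof.
rewrite /omega0; case: ifP => // h; rewrite expR_le1 oppr_le0 invr_ge0 subr_ge0.
by rewrite -real_normK ?num_real // expr_le1 // ltW.
Qed.

Lemma measurable_omega0 : measurable_fun setT (@omega0 R).
Proof.
have -> : @omega0 R = Gw \o (fun x => x ^+ 2) by apply: funext => x; rewrite omega0E.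
apply: measurableT_comp; last exact: measurable_realfun.exprn_measurable.
apply: measurable_realfun.nonincreasing_measurable => // x y xy; exact: Gw_noninc.
Qed.

Lemma int_omega0_le (D : set R) : measurable D ->
  (\int[lebesgue_measure]_(x in D) (omega0 x)%:E <= 2%:E)%E.
Proof.
move=> mD.
apply: (@le_trans _ _ (\int[lebesgue_measure]_(x in D) (\1_`[(-1 : R), 1]%classic x)%:E)%E).
  apply: ge0_le_integral => //.
  - by move=> x _; rewrite lee_fin omega0_ge0.
  - apply/measurable_realfun.measurable_EFinP; apply: measurable_funTS; exact: measurable_omega0.
  - apply/measurable_realfun.measurable_EFinP; apply: measurable_realfun.measurable_indic; exact: measurable_itv.
  move=> x _; rewrite lee_fin indicE; case: (boolP (`|x| < 1)) => h.
    rewrite mem_set; first exact: omega0_le1.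
    by rewrite /= in_itv /=; move: h; rewrite ltr_norml => /andP [/ltW -> /ltW ->].
  by rewrite /omega0 (negbTE h); case: (_ \in _).
rewrite integral_indic //.
have hm : (lebesgue_measure (`[(-1)%R, (1:R)%R]%classic `&` D) <= lebesgue_measure (`[(-1)%R, (1:R)%R]%classic))%E.
  apply: le_measure; rewrite ?inE.
  - by apply: measurableI => //; exact: measurable_itv.
  - exact: measurable_itv.
  - exact: subIsetl.
apply: le_trans hm _.
rewrite lebesgue_measure_itv /= lte_fin.
have -> : ((-1 : R) < 1)%R by lra.
by rewrite opprK -EFinD lee_fin; lra.
Qed.

Lemma Rint_omega0_le (D : set R) : measurable D ->
  \int[lebesgue_measure]_(x in D) omega0 x <= 2.
Proof.
move=> mD; rewrite /Rintegral.
have h1 := int_omega0_le mD.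
have h0 : (0 <= \int[lebesgue_measure]_(x in D) (omega0 x)%:E)%E.
  by apply: integral_ge0 => x _; rewrite lee_fin omega0_ge0.
by move: h0 h1; case: (\int[_]_(_ in _) _)%E => //= r.
Qed.

Lemma c0_ge0 : 0 <= c0 R.
Proof. by apply: Rintegral_ge0 => x _; exact: omega0_ge0. Qed.

Lemma omega_low_ge0 (eps t : R) : 0 <= omega_low eps t.
Proof.
rewrite /omega_low mulr_ge0 ?invr_ge0 ?c0_ge0 //.
by apply: Rintegral_ge0 => x _; exact: omega0_ge0.
Qed.

Lemma omega_low_le (eps t : R) : omega_low eps t <= (c0 R)^-1 * 2.
Proof.
rewrite /omega_low ler_wpM2l ?invr_ge0 ?c0_ge0 //.
apply: Rint_omega0_le; exact: measurable_itv.
Qed.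

Lemma omega_low0 (eps t : R) : 0 < eps -> t <= 0 -> omega_low eps t = 0.
Proof.
move=> e0 t0; rewrite /omega_low /Rintegral integral0_eq ?mulr0 //.
move=> x; rewrite /= in_itv /= => hx.
rewrite /omega0; case: ifP => // h.
have h2 : t / eps <= 0 by rewrite pmulr_lle0 ?invr_gt0.
move: h; rewrite ltr_norml => /andP [h _].
have h3 : (-1 : R) < t / eps - 1 by apply: lt_le_trans h hx.
exfalso; move: h2 h3; clear h hx; clear x; lra.
Qed.
End P4.

End Part3.
Import Part3.

Module Part4.
Local Open Scope ring_scope.

Section P5.
Variable R : realType.

Lemma tau_real (n : nat) (eta : R) : (0 < n)%N -> 0 < eta ->
  exists D : R, 0 <= D /\ forall q, (0 < q)%N -> (tau q)%:R ^+ n <= D * q%:R `^ eta.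
Proof.
move=> n0 e0.
pose m := (Num.truncn (eta^-1)).+1.
have m0 : (0 < m)%N by [].
have k0 : (0 < n * m)%N by rewrite muln_gt0 n0.
have [D0 hD0] := tau_bound k0.
exists ((D0%:R : R) `^ (m%:R^-1)); split; first exact: powR_ge0.
move=> q q0.
have mR : (m%:R : R) != 0 by rewrite pnatr_eq0 -lt0n.
have hmi : (m%:R : R)^-1 <= eta.
  have h1 : eta^-1 < m%:R by exact: truncnS_gt.
  apply: ltW; rewrite -(invrK eta) ltf_pV2 ?posrE ?invr_gt0 ?ltr0n //.
set a : R := (tau q)%:R.
have a0 : 0 <= a by rewrite ler0n.
have e1 : a ^+ n = (a ^+ (n * m)) `^ (m%:R^-1).
  by rewrite -!powR_mulrn // -powRrM natrM -mulrA mulfV // mulr1.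
rewrite e1.
have h2 : a ^+ (n * m) <= (D0 * q)%:R by rewrite /a -natrX ler_nat hD0.
apply: (@le_trans _ _ (((D0 * q)%:R : R) `^ (m%:R^-1))).
  apply: ge0_ler_powR => //.
  - by rewrite nnegrE exprn_ge0.
  - by rewrite nnegrE ler0n.
rewrite natrM powRM ?ler0n // ler_wpM2l ?powR_ge0 //.
apply: ler_powR => //; by rewrite ler1n.
Qed.
End P5.

End Part4.
Import Part4.

Module Part5.
Local Open Scope ring_scope.

Section P6.
Variable R : realType.

Definition Kw : R := (c0 R)^-1 * 2.

Lemma Kw_ge0 : 0 <= Kw.
Proof. by rewrite /Kw mulr_ge0 ?invr_ge0 ?c0_ge0. Qed.

Lemma w_low_ge0 n (eps : R) (i0 : 'I_n.+1) x : 0 <= w_low eps i0 x.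
Proof.
by apply: prodr_ge0 => i _; rewrite mulr_ge0 ?omega_low_ge0.
Qed.

Lemma w_low_le n (eps : R) (i0 : 'I_n.+1) x : w_low eps i0 x <= (1 + Kw * Kw) ^+ n.+1.
Proof.
apply: (@le_trans _ _ (\prod_(i < n.+1 | i != i0) (1 + Kw * Kw))).
  apply: ler_prod => i _; rewrite mulr_ge0 ?omega_low_ge0 //=.
  apply: (@le_trans _ _ (Kw * Kw)); last by rewrite lerDr ler01.
  by rewrite ler_pM ?omega_low_ge0 ?omega_low_le.
rewrite prodr_const ler_weXn2l //; first by rewrite lerDl mulr_ge0 ?Kw_ge0.
by apply: leq_trans (max_card _) _; rewrite card_ord.
Qed.

Lemma xvec_lift n (i0 : 'I_n.+1) X g k : xvec i0 X g (lift i0 k) = g k.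
Proof. by rewrite /xvec liftK. Qed.

Lemma xvec_i0 n (i0 : 'I_n.+1) X g : xvec i0 X g i0 = X.
Proof. by rewrite /xvec unlift_none. Qed.

Lemma w_low_zero n (eps : R) (i0 : 'I_n.+1) (N : nat) (g : 'I_n -> int) k :
  0 < eps -> (0 < N)%N -> ((`|g k|%N <= 1)%N || (N <= `|g k|%N)%N) ->
  w_low eps i0 (xvec i0 N%:Z g) = 0.
Proof.
move=> e0 N0 hk.
rewrite /w_low (bigD1 (lift i0 k)) /=; last by rewrite eq_sym neq_lift.
rewrite xvec_lift xvec_i0.
have N0' : (0 : R) < (N%:Z)%:~R by rewrite ltr0z ltz_nat.
have ha : `|(g k)%:~R : R| = (`|g k|%N)%:R by rewrite -intr_norm -abszE.
rewrite ha.
case/orP: hk => hk.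
  rewrite [omega_low eps (_ - 1 / _)]omega_low0 // ?mulr0 ?mul0r //.
  rewrite -mulrBl pmulr_lle0 ?invr_gt0 // subr_le0.
  by rewrite (_ : (1 : R) = 1%:R) // ler_nat.
rewrite [omega_low eps (1 - _)]omega_low0 // ?mul0r //.
rewrite subr_le0 ler_pdivlMr // mul1r.
by rewrite (_ : (N%:Z)%:~R = N%:R :> R) // ler_nat.
Qed.

Lemma gcd_swap n q (i0 j0 : 'I_n.+1) (x : 'I_n.+1 -> int) : (0 < q)%N ->
  \prod_(k < n) (q%:R * (gcdn `|x (lift j0 k)| q)%:R) <=
  q%:R ^+ n * (q%:R * \prod_(k < n) ((gcdn `|x (lift i0 k)| q)%:R : R)).
Proof.
move=> q0; rewrite big_split /= prodr_const card_ord ler_pM2l ?exprn_gt0 ?ltr0n //.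
pose ga k : R := (gcdn `|x k| q)%:R.
have g1 k : 1 <= ga k by rewrite /ga ler1n gcdn_gt0 q0 orbT.
have gq k : ga k <= q%:R by rewrite /ga ler_nat dvdn_leq // dvdn_gcdr.
have g0 k : 0 <= ga k by apply: le_trans (g1 k); exact: ler01.
have ej : \prod_(k < n.+1) ga k = ga j0 * \prod_(k < n) ga (lift j0 k).
  by rewrite (bigD1_ord j0).
have ei : \prod_(k < n.+1) ga k = ga i0 * \prod_(k < n) ga (lift i0 k).
  by rewrite (bigD1_ord i0).
have p0 : 0 <= \prod_(k < n) ga (lift j0 k) by apply: prodr_ge0.
have p0' : 0 <= \prod_(k < n) ga (lift i0 k) by apply: prodr_ge0.
apply: (@le_trans _ _ (ga j0 * \prod_(k < n) ga (lift j0 k))).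
  by rewrite ler_peMl.
rewrite -ej ei; exact: ler_wpM2r.
Qed.

Lemma F_le n (eps : R) (i0 j0 : 'I_n.+1) (X y : int) (c : 'I_n.+1 -> int) (q : nat) (g : 'I_n -> int) :
  (0 < q)%N ->
  \sum_(a : {ffun 'I_n -> 'I_q}) w_low eps i0 (xvec i0 X g) *
      Normc.normc (@S_q R n q (xvec i0 X g) (@avec n j0 y q a) c)
  <= (1 + Kw * Kw) ^+ n.+1 * q%:R ^+ (n + 3) * \prod_(k < n) ((gcdn `|g k| q)%:R : R).
Proof.
move=> q0; rewrite -mulr_sumr.
set w := w_low eps i0 (xvec i0 X g).
have w0 : 0 <= w by exact: w_low_ge0.
have := sum_a_bound R j0 (xvec i0 X g) c y q0.
set P := \prod_(k < n) _ => hP.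
have hs := gcd_swap i0 j0 (xvec i0 X g) q0.
have e : \prod_(k < n) ((gcdn `|xvec i0 X g (lift i0 k)| q)%:R : R) =
   \prod_(k < n) ((gcdn `|g k| q)%:R : R) by apply: eq_bigr => k _; rewrite xvec_lift.
rewrite e in hs.
have P0 : 0 <= P by apply: prodr_ge0 => k _; rewrite mulr_ge0 ?ler0n.
apply: (@le_trans _ _ (w * (q%:R ^+ 2 * P))).
  by rewrite ler_wpM2l.
apply: (@le_trans _ _ ((1 + Kw * Kw) ^+ n.+1 * (q%:R ^+ 2 * (q%:R ^+ n * (q%:R * \prod_(k < n) ((gcdn `|g k| q)%:R : R)))))).
  apply: ler_pM => //.
  - by rewrite mulr_ge0 ?exprn_ge0 ?ler0n.
  - exact: w_low_le.
  by rewrite ler_wpM2l ?exprn_ge0 ?ler0n.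
rewrite exprD le_eqVlt; apply/orP; left; apply/eqP; ring.
Qed.

End P6.

End Part5.
Import Part5.

Module Part6.
Local Open Scope ring_scope.
Local Open Scope classical_set_scope.

Section P7.
Variable R : realType.

Lemma esum_fin (T : choiceType) (U : finType) (F : T -> R) (phi : U -> T) :
  injective phi -> (forall g, 0 <= F g) ->
  (forall g, (forall h, phi h != g) -> F g = 0) ->
  (\esum_(g in [set: T]) (F g)%:E = (\sum_(h : U) F (phi h))%:E)%E.
Proof.
move=> inj F0 Fz.
rewrite (@eq_esum _ _ _ _ (fun g => if g \in (phi @` setT) then (F g)%:E else 0%E)); last first.
  move=> g _; case: ifP => // hg; rewrite Fz //.
  move=> h; apply/eqP => e; move/negP: hg; apply; rewrite inE; by exists h.
rewrite -esum_mkcond esum_image; last by move=> x y _ _; exact: inj.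
rewrite esum_fset //; last by move=> i _; rewrite lee_fin.
rewrite (fsbigE (index_enum U)) ?index_enum_uniq //; last first.
  by move=> i _; rewrite mem_index_enum.
rewrite sumEFin; congr (_%:E); apply: eq_bigl => i; exact: in_setT.
exact: finite_finset.
Qed.
End P7.

End Part6.
Import Part6.

Module Part8.
Local Open Scope ring_scope.

Lemma normc_ge0 (R : realType) (z : R[i]) : 0 <= Normc.normc z.
Proof. by case: z => ? ?; rewrite /Normc.normc sqrtr_ge0. Qed.

Definition phi (n N : nat) (h : {ffun 'I_n -> bool * 'I_N}) : {ffun 'I_n -> int} :=
  [ffun k => (if (h k).1 then 1 else -1) * (((h k).2 : nat).+1)%:Z].

Lemma phi_inj n N : injective (@phi n N).
Proof.
move=> h1 h2 e; apply/ffunP => k; move/ffunP: e => /(_ k); rewrite !ffunE.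
case: (h1 k) (h2 k) => [b1 v1] [b2 v2] /=.
case: b1; case: b2; rewrite ?mul1r ?mulN1r => e.
- by case: e => /val_inj ->.
- by exfalso; move: e; lia.
- by exfalso; move: e; lia.
- by move/oppr_inj: e => [] /val_inj ->.
Qed.

Lemma phi_abs n N h k : `|@phi n N h k|%N = ((h k).2).+1.
Proof. by rewrite ffunE abszM; case: ((h k).1); rewrite /= ?mul1n. Qed.


End Part8.
Import Part8.

Local Open Scope ring_scope.
Unset Implicit Arguments.
Theorem mainTheorem5 (R : realType) (n : nat) (eps eta : R) :
  (2 <= n)%N -> 0 < eps < 1 -> 0 < eta ->
  exists C : R,
    forall (i0 j0 : 'I_n.+1) (X y : int) (c : 'I_n.+1 -> int) (q : nat),
      1 <= X -> (1 <= q)%N ->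
      (\esum_(g in [set: {ffun 'I_n -> int}])
         (\sum_(a : {ffun 'I_n -> 'I_q})
            w_low eps i0 (xvec i0 X g) *
            Normc.normc (@S_q R n q (xvec i0 X g) (@avec n j0 y q a) c))%:E
       <= (C * (q%:R `^ (n%:R + 3 + eta)) * X%:~R ^+ n)%:E)%E.
Proof.
move=> n2 /andP [e0 e1] eta0.
have n0 : (0 < n)%N by apply: leq_trans n2.
have [D [D0 hD]] := tau_real n0 eta0.
pose W : R := (1 + Kw R * Kw R) ^+ n.+1.
have W0 : 0 <= W by rewrite exprn_ge0 // addr_ge0 // mulr_ge0 // Kw_ge0.
exists (W * 2%:R ^+ n * D).
move=> i0 j0 X y c q hX hq.
case: X hX => [N|N] hX; last by move: hX.
case: N hX => [|N] hX; first by move: hX.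
rewrite (@esum_fin R {ffun 'I_n -> int} {ffun 'I_n -> bool * 'I_N.+1} (fun g => \sum_(a : {ffun 'I_n -> 'I_q})
            w_low eps i0 (xvec i0 N.+1 g) *
            Normc.normc (@S_q R n q (xvec i0 N.+1 g) (@avec n j0 y q a) c)) (@phi n N.+1)).
- rewrite lee_fin.
  pose u (p : bool * 'I_N.+1) : R := (gcdn p.2.+1 q)%:R.
  apply: (@le_trans _ _ (\sum_(h : {ffun 'I_n -> bool * 'I_N.+1})
       (W * q%:R ^+ (n + 3) * \prod_(k < n) u (h k)))).
    apply: ler_sum => h _.
    apply: le_trans (@F_le R n eps i0 j0 N.+1 y c q (phi h) hq) _.
    rewrite le_eqVlt; apply/orP; left; apply/eqP; congr (_ * _).
    by apply: eq_bigr => k _; rewrite /u phi_abs.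
  rewrite -mulr_sumr -(bigA_distr_bigA (fun (k : 'I_n) (p : bool * 'I_N.+1) => u p)) prodr_const card_ord.
  set S := \sum_(p : bool * 'I_N.+1) u p.
  have S0 : 0 <= S by apply: sumr_ge0 => p _; rewrite ler0n.
  have hS : S <= 2 * (N.+1%:R * (tau q)%:R).
    rewrite /S /u -(pair_bigA _ (fun (b : bool) (v : 'I_N.+1) => ((gcdn v.+1 q)%:R : R))).
    rewrite big_bool /=.
    have hT : \sum_(j < N.+1) ((gcdn j.+1 q)%:R : R) <= N.+1%:R * (tau q)%:R.
      by rewrite -natr_sum -natrM ler_nat sum_gcd.
    lra.
  have q0' : (q%:R : R) != 0 by rewrite pnatr_eq0 -lt0n.
  have eq : q%:R `^ (n%:R + 3 + eta) = q%:R ^+ (n + 3) * q%:R `^ eta.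
    rewrite powRD ?q0' ?implybT // (_ : n%:R + 3 = (n + 3)%:R) ?powR_mulrn ?ler0n //.
    by rewrite natrD.
  rewrite eq.
  apply: (@le_trans _ _ (W * q%:R ^+ (n + 3) * (2%:R ^+ n * N.+1%:R ^+ n * (D * q%:R `^ eta)))).
    apply: ler_wpM2l; first by apply: mulr_ge0 => //; apply: exprn_ge0; exact: ler0n.
    apply: (@le_trans _ _ ((2 * (N.+1%:R * (tau q)%:R)) ^+ n)).
      by rewrite ler_pXn2r // ?nnegrE ?mulr_ge0 ?ler0n.
    rewrite !exprMn -mulrA; apply: ler_wpM2l; first by rewrite exprn_ge0 ?ler0n.
    apply: ler_wpM2l; first by rewrite exprn_ge0 ?ler0n.
    exact: hD.
  rewrite le_eqVlt; apply/orP; left; apply/eqP.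
  rewrite (_ : (N.+1%:Z)%:~R = N.+1%:R :> R) //; ring.
- exact: phi_inj.
- by move=> g; apply: sumr_ge0 => a _; rewrite mulr_ge0 ?w_low_ge0 ?normc_ge0.
move=> g hg.
case: (boolP (w_low eps i0 (xvec i0 N.+1 g) == 0)) => hw.
  by rewrite (eqP hw); apply: big1 => a _; rewrite mul0r.
exfalso.
have hk : forall k, (1 < `|g k|)%N && (`|g k| < N.+1)%N.
  move=> k; apply/negPn/negP => hk; move/negP: hw; apply; apply/eqP.
  apply: (@w_low_zero R n eps i0 N.+1 g k) => //.
  by move: hk; rewrite negb_and -!leqNgt.
pose h : {ffun 'I_n -> bool * 'I_N.+1} := [ffun k => ((0 <= g k), inord (`|g k|.-1))].
suff e : phi h = g by move: (hg h); rewrite e eqxx.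
apply/ffunP => k.
have /andP [h1 h2] := hk k.
have g0 : (0 < `|g k|)%N by apply: ltn_trans h1.
rewrite !ffunE /= inordK; last by apply: leq_ltn_trans (leq_pred _) h2.
rewrite prednK //.
case: (lerP 0 (g k)) => hg0.
  by rewrite mul1r gez0_abs.
by rewrite mulN1r ltz0_abs ?opprK.
Qed.
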